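(* Let $\Bbbk$ be a field and let $I\subseteq \Bbbk[x,y,z]$ be a monomial ideal generated in degree $d$ which has a linear resolution. Then there is an ordering $m_1,\ldots,m_r$ of its minimal monomial generators such that $I$ has linear quotients with respect to this ordering, i.e. $(m_1,\ldots,m_{i-1}):m_i$ is generated by variables for every $i=2,\ldots,r$.
   Context: $\Bbbk[x,y,z]$ is the standard graded polynomial ring. A homogeneous ideal generated in degree $d$ has a linear resolution if its graded Betti numbers satisfy $\beta_{i,i+j}(I)=0$ for all $i\geq 0$ and $j\neq d$. *)

(* Defs.v *)
From HB Require Import structures.
From mathcomp Require Import all_boot all_order all_algebra.
From mathcomp Require Import mpoly.
Set Implicit Arguments. Unset Strict Implicit. Unset Printing Implicit Defensive.
Import Order.TTheory GRing.Theory.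
Local Open Scope ring_scope.

Section Defs.
Variables (F : fieldType) (n : nat).

Definition in_ideal (gs : seq {mpoly F[n]}) (f : {mpoly F[n]}) : Prop :=
  exists c : 'I_(size gs) -> {mpoly F[n]}, f = \sum_(k < size gs) c k * gs`_k.

Definition monp (m : 'X_{1..n}) : {mpoly F[n]} := 'X_[m].

Definition colon_gen_by_vars (prev : seq 'X_{1..n}) (m : 'X_{1..n}) : Prop :=
  exists S : {set 'I_n}, forall f : {mpoly F[n]},
    in_ideal [seq monp u | u <- prev] (f * monp m) <->
    in_ideal [seq monp (mnm1 j) | j <- enum S] f.

(* I has linear quotients w.r.t. the ordering ms = m_1,...,m_r
   (indices in Rocq are 0-based: for i = 1..r-1, (ms_0..ms_{i-1}) : ms_i) *)
Definition linear_quotients (ms : seq 'X_{1..n}) : Prop :=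
  forall i, (0 < i < size ms)%N -> colon_gen_by_vars (take i ms) (nth 0%MM ms i).

Definition mdivb (m1 m2 : 'X_{1..n}) : bool := [forall j, (m1 j <= m2 j)%N].

Definition mon_in (G : seq 'X_{1..n}) (m : 'X_{1..n}) : bool :=
  has (fun g => mdivb g m) G.

Definition mnm_set (S : {set 'I_n}) : 'X_{1..n} := [multinom (j \in S : nat) | j < n].

(* In multidegree b, the Koszul complex K(x_0..x_{n-1}) (x) I has basis the
   e_S (S a set of variables) with x^(b - 1_S) in I (and b >= 1_S);
   e_S sits in homological degree #|S|. *)
Definition kvalid (G : seq 'X_{1..n}) (b : 'X_{1..n}) (S : {set 'I_n}) : bool :=
  mdivb (mnm_set S) b && mon_in G (mnm_sub b (mnm_set S)).

Let N := #|{set 'I_n}|.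

Definition kproj (G : seq 'X_{1..n}) (b : 'X_{1..n}) (i : nat) : 'M[F]_N :=
  \matrix_(p < N, q < N)
    (if (p == q) && kvalid G b (enum_val p) && (#|enum_val p| == i)%N
     then 1 else 0).

(* Koszul differential (row-vector convention):
   (x^(b-1_S)) e_S  |->  sum_{j in S} (-1)^{#{k in S, k < j}} (x^(b-1_S) x_j) e_{S \ j} *)
Definition kdiff (G : seq 'X_{1..n}) (b : 'X_{1..n}) : 'M[F]_N :=
  \matrix_(p < N, q < N)
    (let S := enum_val p in let T := enum_val q in
     if kvalid G b S then
       \sum_(j in S | T == S :\ j) (-1) ^+ #|[set k in S | (k < j)%N]|
     else 0).

(* multigraded Betti number  beta_{i,b}(I) = dim_k Tor_i(I, k)_b
   = dim_k H_i(K(x) (x) I)_b  (Koszul homology), where I is the monomial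
   ideal generated by G *)
Definition betti_mdeg (G : seq 'X_{1..n}) (i : nat) (b : 'X_{1..n}) : nat :=
  (\rank (kproj G b i) - \rank (kproj G b i *m kdiff G b)
     - \rank (kproj G b i.+1 *m kdiff G b))%N.

(* I has a d-linear resolution: beta_{i,j}(I) = sum_{|b| = j} beta_{i,b}(I) = 0
   whenever j <> i + d *)
Definition linear_resolution (G : seq 'X_{1..n}) (d : nat) : Prop :=
  forall (i : nat) (b : 'X_{1..n}), mdeg b <> (i + d)%N -> betti_mdeg G i b = 0%N.

End Defs.

(* Main.v *)
Require Import Defs.
From HB Require Import structures.
From mathcomp Require Import all_boot all_order all_algebra.
From mathcomp Require Import mpoly.
From mathcomp Require Import zify ring.
Set Implicit Arguments. Unset Strict Implicit. Unset Printing Implicit Defensive.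
Import Order.TTheory GRing.Theory.

Notation mon := ('X_{1..3}).

Definition o0 : 'I_3 := @Ordinal 3 0 isT.
Definition o1 : 'I_3 := @Ordinal 3 1 isT.
Definition o2 : 'I_3 := @Ordinal 3 2 isT.

Lemma ord3_ind (P : 'I_3 -> Prop) : P o0 -> P o1 -> P o2 -> forall i, P i.
Proof.
move=> H0 H1 H2 [[|[|[|k]]] hk] //.
- by rewrite (_ : Ordinal hk = o0) //; apply: val_inj.
- by rewrite (_ : Ordinal hk = o1) //; apply: val_inj.
- by rewrite (_ : Ordinal hk = o2) //; apply: val_inj.
Qed.

Lemma ord3_pqr (p q r : 'I_3) : p != q -> q != r -> p != r ->
  forall i, i = p \/ i = q \/ i = r.
Proof.
elim/ord3_ind: p; elim/ord3_ind: q; elim/ord3_ind: r => // _ _ _;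
  elim/ord3_ind; auto.
Qed.

Lemma sum3 (p q r : 'I_3) (f : 'I_3 -> nat) : p != q -> q != r -> p != r ->
  (\sum_i f i = f p + f q + f r)%N.
Proof.
rewrite !big_ord_recr big_ord0 /=.
have E0 : (widen_ord (leqnSn 2) (widen_ord (leqnSn 1) ord_max)) = o0 by apply: val_inj.
have E1 : (widen_ord (leqnSn 2) ord_max) = o1 by apply: val_inj.
have E2 : (@ord_max 2) = o2 by apply: val_inj.
rewrite E0 E1 E2.
elim/ord3_ind: p; elim/ord3_ind: q; elim/ord3_ind: r => //= _ _ _; lia.
Qed.

Lemma neq6 (p q r : 'I_3) : p != q -> q != r -> p != r ->
  ((p == q) = false) * ((q == p) = false) * ((q == r) = false) * ((r == q) = false)
  * ((p == r) = false) * ((r == p) = false).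
Proof.
move=> npq nqr npr; (repeat split); apply/negbTE => //; by rewrite eq_sym.
Qed.

Ltac evq N := rewrite /= ?mnmDE ?mnm1E ?mnmE ?eqxx ?N /=.

Ltac crd N H p q r :=
  let h0 := fresh "h" in let h1 := fresh "h" in let h2 := fresh "h" in
  have h0 := congr1 (fun m : mon => m p) H;
  have h1 := congr1 (fun m : mon => m q) H;
  have h2 := congr1 (fun m : mon => m r) H;
  move: h0 h1 h2; evq N => h0 h1 h2; clear H.

Lemma mdivbP (n : nat) (a b : 'X_{1..n}) : reflect (forall i, a i <= b i)%N (mdivb a b).
Proof. exact: forallP. Qed.

Lemma mdivb3 (p q r : 'I_3) (a b : mon) : p != q -> q != r -> p != r ->
  mdivb a b = [&& (a p <= b p)%N, (a q <= b q)%N & (a r <= b r)%N].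
Proof.
move=> npq nqr npr; apply/mdivbP/and3P.
  by move=> H; split; apply: H.
by case=> h1 h2 h3 i; case: (ord3_pqr npq nqr npr i) => [->|[->|->]].
Qed.

Lemma mnm3P (p q r : 'I_3) (a b : mon) : p != q -> q != r -> p != r ->
  a p = b p -> a q = b q -> a r = b r -> a = b.
Proof.
move=> npq nqr npr h1 h2 h3; apply/mnmP => i.
by case: (ord3_pqr npq nqr npr i) => [->|[->|->]].
Qed.

Lemma mdeg3 (p q r : 'I_3) (a : mon) : p != q -> q != r -> p != r ->
  mdeg a = (a p + a q + a r)%N.
Proof. by move=> npq nqr npr; rewrite mdegE (sum3 (fun i => a i) npq nqr npr). Qed.

Lemma mon_inP (n : nat) (G : seq 'X_{1..n}) c :
  reflect (exists2 g, g \in G & mdivb g c) (mon_in G c).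
Proof. exact: hasP. Qed.

Lemma mon_in_mono (n : nat) (G : seq 'X_{1..n}) a b : mon_in G a -> mdivb a b -> mon_in G b.
Proof.
move=> /mon_inP [g gG /mdivbP ga] /mdivbP ab; apply/mon_inP; exists g => //.
by apply/mdivbP => i; apply: leq_trans (ga i) (ab i).
Qed.

Definition adj (u w : mon) := exists l s, l != s /\ (w + U_(s) = u + U_(l))%MM.

Definition Cc (G : seq mon) := forall (b : mon) (P : mon -> Prop),
  (exists g, [/\ g \in G, mdivb g b & P g]) ->
  (forall x y, x \in G -> y \in G -> mdivb x b -> mdivb y b -> adj x y -> P x -> P y) ->
  forall g, g \in G -> mdivb g b -> P g.

Definition Bc (G : seq mon) (d : nat) := forall c : mon, (d <= mdeg c)%N ->
  (forall l, mon_in G (c + U_(l))%MM) -> mon_in G c.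

Definition colon_comb (P : seq mon) (u : mon) :=
  forall v, v \in P -> exists l, (u l < v l)%N /\ mon_in P (u + U_(l))%MM.

Definition mmax (u v : mon) : mon := [multinom maxn (u i) (v i) | i < 3].

Lemma adj_sym u w : adj u w -> adj w u.
Proof.
case=> l [s [nls E]]; exists s, l; split; first by rewrite eq_sym.
by rewrite E.
Qed.

Lemma adj_neq u w : adj u w -> w != u.
Proof.
case=> l [s [nls E]]; apply/eqP => wu; move: E; rewrite wu => /addmI E.
have := congr1 (fun m : mon => m s) E; rewrite !mnm1E eqxx => h.
by move: nls; case: (l == s) h.
Qed.

Lemma colon_from_C (G : seq mon) u : uniq G -> Cc G -> u \in G -> colon_comb (rem u G) u.
Proof.
move=> uG CG uin v; rewrite mem_rem_uniq // inE => /andP [nvu vG].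
pose b := mmax u v.
have ub : mdivb u b by apply/mdivbP => i; rewrite mnmE leq_maxl.
have vb : mdivb v b by apply/mdivbP => i; rewrite mnmE leq_maxr.
pose Q := exists w, [/\ w \in G, mdivb w b & adj u w].
have : (fun x => x = u \/ Q) v.
  apply: (CG b (fun x => x = u \/ Q)) => //; first by exists u; split => //; left.
  move=> x y xG yG xb yb axy [xu|] ; last by right.
  by right; exists y; split => //; rewrite -xu.
case=> [/eqP|]; first by rewrite (negbTE nvu).
case=> w [wG wb [l [s [nls E]]]].
have wnu : w != u by apply: adj_neq; exists l, s.
exists l; split.
  have := congr1 (fun m : mon => m l) E; rewrite !mnmDE !mnm1E eqxx [s == l]eq_sym (negbTE nls) addn0 => El.
  move/mdivbP: wb => /(_ l); rewrite mnmE El; lia.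
apply/mon_inP; exists w; first by rewrite mem_rem_uniq // inE wnu.
apply/mdivbP => i; have := congr1 (fun m : mon => m i) E; rewrite !mnmDE => <-.
exact: leq_addr.
Qed.

Lemma mdiv_eq_deg (p q r : 'I_3) (g c : mon) : p != q -> q != r -> p != r ->
  mdivb g c -> mdeg g = mdeg c -> g = c.
Proof.
move=> npq nqr npr; rewrite (mdivb3 _ _ npq nqr npr) (mdeg3 g npq nqr npr) (mdeg3 c npq nqr npr).
move=> /and3P [h1 h2 h3] hd; apply: (mnm3P npq nqr npr); lia.
Qed.

Lemma hole (G : seq mon) d (p q r : 'I_3) u a z : p != q -> q != r -> p != r ->
  (forall g, g \in G -> mdeg g = d) -> Bc G d -> u \in G -> a \in G -> z \in G ->
  (a + U_(p) = u + U_(q))%MM -> (z p).+1 = u p -> (z q <= u q)%N ->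
  exists2 m, m \in G & (m + U_(p) = u + U_(r))%MM.
Proof.
move=> npq nqr npr Gd BG uG aG zG Ea Ezp Ezq.
have N := neq6 npq nqr npr.
pose c (k : nat) : mon := [multinom (u i + (i == r) * k - (i == p))%N | i < 3].
have du := Gd u uG; have dz := Gd z zG.
rewrite (mdeg3 _ npq nqr npr) in du; rewrite (mdeg3 _ npq nqr npr) in dz.
crd N Ea p q r.
pose K := (u q - z q).+1.
have claim : forall j, (j < K)%N -> mon_in G (c (K - j)).
  elim=> [_|j IH ltjK].
    apply/mon_inP; exists z => //; rewrite (mdivb3 _ _ npq nqr npr) /c; evq N.
    apply/and3P; split; lia.
  have k1 : (K - j = (K - j.+1).+1)%N by lia.
  apply: BG.
    rewrite (mdeg3 _ npq nqr npr) /c; evq N; lia.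
  move=> l; case: (ord3_pqr npq nqr npr l) => [->|[->|->]].
  - apply: (mon_in_mono (a := u)); first by apply/mon_inP; exists u => //; apply/mdivbP.
    rewrite (mdivb3 _ _ npq nqr npr) /c; evq N; apply/and3P; split; lia.
  - apply: (mon_in_mono (a := a)); first by apply/mon_inP; exists a => //; apply/mdivbP.
    rewrite (mdivb3 _ _ npq nqr npr) /c; evq N; apply/and3P; split; lia.
  - apply: (mon_in_mono (a := c (K - j))); first by apply: IH; lia.
    rewrite (mdivb3 _ _ npq nqr npr) /c; evq N; apply/and3P; split; lia.
have /mon_inP [g gG gc] := claim (K.-1) (ltnSn _).
have E := mdiv_eq_deg npq nqr npr gc.
have : mdeg g = mdeg (c (K - K.-1)).
  rewrite Gd // (mdeg3 _ npq nqr npr) /c; evq N; lia.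
move=> /E {}E; exists g => //; rewrite E.
apply: (mnm3P npq nqr npr); rewrite /c; evq N; lia.
Qed.

Lemma lexmax (s : seq mon) (f1 f2 : mon -> nat) : s != [::] ->
  exists2 u, u \in s & forall g, g \in s ->
    (f1 g < f1 u)%N \/ (f1 g = f1 u /\ (f2 g <= f2 u))%N.
Proof.
elim: s => // x s IH _.
case: (altP (s =P [::])) => [->|/IH [u us Hu]].
  by exists x; rewrite ?inE // => g; rewrite inE => /eqP ->; right.
case: (ltngtP (f1 x) (f1 u)) => [lt|gt|eq].
- exists u; first by rewrite inE us orbT.
  by move=> g; rewrite inE => /orP [/eqP ->|/Hu]; [left|].
- exists x; first by rewrite inE eqxx.
  move=> g; rewrite inE => /orP [/eqP ->|/Hu]; first by right.
  case=> [h|[h1 h2]]; left; lia.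
- case: (leqP (f2 x) (f2 u)) => le.
  + exists u; first by rewrite inE us orbT.
    by move=> g; rewrite inE => /orP [/eqP ->|/Hu]; [right|].
  + exists x; first by rewrite inE eqxx.
    move=> g; rewrite inE => /orP [/eqP ->|/Hu]; first by right.
    case=> [h|[h1 h2]]; [left|right]; lia.
Qed.

Ltac adjtac N p q r npq nqr npr :=
  let tr l s := (exists l, s; split; [by rewrite ?N | apply: (mnm3P npq nqr npr); evq N; lia]) in
  first [ tr p q | tr q p | tr q r | tr r q | tr p r | tr r p ].

Lemma dirs_lem (p q r l s : 'I_3) (u w : mon) : p != q -> q != r -> p != r ->
  l != s -> (w + U_(s) = u + U_(l))%MM ->
  ((w p < u p)%N \/ (w p = u p /\ (w q <= u q)%N)) ->
  [\/ l = q /\ s = p, l = r /\ s = p | l = r /\ s = q].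
Proof.
move=> npq nqr npr nls Ew Hl.
have N := neq6 npq nqr npr.
move: nls Ew; case: (ord3_pqr npq nqr npr l) => [->|[->|->]]; case: (ord3_pqr npq nqr npr s) => [->|[->|->]];
  rewrite ?eqxx // => _ Ew; crd N Ew p q r;
  try (by constructor 1); try (by constructor 2); try (by constructor 3); exfalso; lia.
Qed.

Lemma linked_lem (p q r l1 s1 l2 s2 : 'I_3) (u n1 n2 : mon) : p != q -> q != r -> p != r ->
  (n1 + U_(s1) = u + U_(l1))%MM -> (n2 + U_(s2) = u + U_(l2))%MM ->
  [\/ l1 = q /\ s1 = p, l1 = r /\ s1 = p | l1 = r /\ s1 = q] ->
  [\/ l2 = q /\ s2 = p, l2 = r /\ s2 = p | l2 = r /\ s2 = q] ->
  [\/ n1 = n2, adj n1 n2, [/\ l1 = q, s1 = p, l2 = r & s2 = q] | [/\ l1 = r, s1 = q, l2 = q & s2 = p]].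
Proof.
move=> npq nqr npr E1 E2 D1 D2.
have N := neq6 npq nqr npr.
move: E1 E2; case: D1 => [[-> ->]|[-> ->]|[-> ->]]; case: D2 => [[-> ->]|[-> ->]|[-> ->]] => E1 E2;
  try (by constructor 3); try (by constructor 4);
  crd N E1 p q r; crd N E2 p q r;
  first [ constructor 1; apply: (mnm3P npq nqr npr); lia
        | constructor 2; adjtac N p q r npq nqr npr ].
Qed.

Lemma via_m (p q r : 'I_3) (u n1 n2 m b : mon) : p != q -> q != r -> p != r ->
  (n1 + U_(p) = u + U_(q))%MM -> (n2 + U_(q) = u + U_(r))%MM -> (m + U_(p) = u + U_(r))%MM ->
  [/\ adj n1 m, adj m n2, (mdivb n1 b -> mdivb n2 b -> mdivb m b) & m != u].
Proof.
move=> npq nqr npr E1 E2 E3.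
have N := neq6 npq nqr npr.
have mnu : m != u.
  apply/eqP => mu; move: E3; rewrite mu => /addmI E.
  by have := congr1 (fun x : mon => x p) E; evq N.
crd N E1 p q r; crd N E2 p q r; crd N E3 p q r.
split => //.
- adjtac N p q r npq nqr npr.
- adjtac N p q r npq nqr npr.
- rewrite !(mdivb3 _ _ npq nqr npr) => /and3P [? ? ?] /and3P [? ? ?]; apply/and3P; split; lia.
Qed.

Lemma removal_good (G : seq mon) d (p q r : 'I_3) u : p != q -> q != r -> p != r ->
  uniq G -> Cc G -> Bc G d -> u \in G ->
  (forall g, g \in G -> (g p < u p)%N \/ (g p = u p /\ (g q <= u q)%N)) ->
  (forall a c2, a \in G -> c2 \in G -> (a + U_(p) = u + U_(q))%MM ->
     (c2 + U_(q) = u + U_(r))%MM -> exists2 m, m \in G & (m + U_(p) = u + U_(r))%MM) ->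
  Cc (rem u G) /\ Bc (rem u G) d.
Proof.
move=> npq nqr npr uG CG BG uin lexm good.
have N := neq6 npq nqr npr.
have memR : forall x, (x \in rem u G) = (x != u) && (x \in G).
  by move=> x; rewrite mem_rem_uniq // inE.
have monR : forall c, mon_in (rem u G) c -> mon_in G c.
  move=> c /mon_inP [g]; rewrite memR => /andP [_ gG] gc; apply/mon_inP; by exists g.
split; last first.
  move=> c dc Hc; have /mon_inP [g gG gc] := BG c dc (fun l => monR _ (Hc l)).
  case: (altP (g =P u)) => [gu|gnu]; last by apply/mon_inP; exists g; rewrite // memR gnu.
  have /mon_inP [h] := Hc p; rewrite memR => /andP [hnu hG] hc.
  case: (leqP (h p) (c p)) => hp.
    apply/mon_inP; exists h; rewrite ?memR ?hnu //.
    move: hc; rewrite !(mdivb3 _ _ npq nqr npr); evq N; move=> /and3P [h1 h2 h3].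
    apply/and3P; split; lia.
  move: gc; rewrite gu (mdivb3 _ _ npq nqr npr) => /and3P [g1 _ _].
  have := lexm h hG; lia.
have dirs : forall w l s, w \in G -> l != s -> (w + U_(s) = u + U_(l))%MM ->
    [\/ l = q /\ s = p, l = r /\ s = p | l = r /\ s = q].
  move=> w l s wG nls E.
  by apply: dirs_lem npq nqr npr nls E (lexm w wG).
move=> b P [g0 [g0R g0b Pg0]] hP g gR gb.
have nb : forall n1 n2, n1 \in rem u G -> n2 \in rem u G -> mdivb n1 b -> mdivb n2 b ->
    adj u n1 -> adj u n2 -> P n1 -> P n2.
  move=> n1 n2 n1R n2R n1b n2b [l1 [s1 [nls1 E1]]] [l2 [s2 [nls2 E2]]] Pn1.
  have n1G : n1 \in G by move: n1R; rewrite memR => /andP [].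
  have n2G : n2 \in G by move: n2R; rewrite memR => /andP [].
  have D1 := dirs n1 l1 s1 n1G nls1 E1; have D2 := dirs n2 l2 s2 n2G nls2 E2.
  case: (linked_lem npq nqr npr E1 E2 D1 D2) => [e12|a12|[? ? ? ?]|[? ? ? ?]]; subst.
  - by [].
  - exact: (hP n1 n2 n1R n2R n1b n2b a12 Pn1).
  - have [m mG Em] := good n1 n2 n1G n2G E1 E2.
    have [a1m am2 mb mnu] := via_m b npq nqr npr E1 E2 Em.
    have mR : m \in rem u G by rewrite memR mnu mG.
    apply: (hP m n2 mR n2R (mb n1b n2b) n2b am2).
    exact: (hP n1 m n1R mR n1b (mb n1b n2b) a1m Pn1).
  - have [m mG Em] := good n2 n1 n2G n1G E2 E1.
    have [a2m am1 mb mnu] := via_m b npq nqr npr E2 E1 Em.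
    have mR : m \in rem u G by rewrite memR mnu mG.
    apply: (hP m n2 mR n2R (mb n2b n1b) n2b (adj_sym a2m)).
    exact: (hP n1 m n1R mR n1b (mb n2b n1b) (adj_sym am1) Pn1).
pose P' x := if x == u then exists n, [/\ n \in rem u G, mdivb n b, adj u n & P n] else P x.
have gnu : g != u by move: gR; rewrite memR => /andP [].
have gG : g \in G by move: gR; rewrite memR => /andP [].
suff : P' g by rewrite /P' (negbTE gnu).
apply: (CG b P') => //.
  exists g0; move: g0R; rewrite memR => /andP [g0nu g0G]; split => //.
  by rewrite /P' (negbTE g0nu).
move=> x y xG yG xb yb axy; rewrite /P'.
case: (altP (x =P u)) => [xu|xnu]; case: (altP (y =P u)) => [yu|ynu] //.
- case=> n [nR nb' an Pn].
  have yR : y \in rem u G by rewrite memR ynu yG.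
  by apply: (nb n y nR yR nb' yb an) => //; rewrite -xu.
- move=> Px; exists x; split => //; first by rewrite memR xnu xG.
  by apply: adj_sym; rewrite -yu.
- apply: hP => //; by rewrite memR ?xnu ?ynu.
Qed.

Lemma removal (G : seq mon) d : uniq G -> (forall g, g \in G -> mdeg g = d) ->
  Cc G -> Bc G d -> G != [::] ->
  exists2 u, u \in G & Cc (rem u G) /\ Bc (rem u G) d.
Proof.
move=> uG Gd CG BG Gn.
have [u uin Hu] := lexmax (fun g => g o0) (fun g => g o1) Gn.
have [u' u'in Hu'] := lexmax (fun g => g o0) (fun g => g o2) Gn.
have e0 : u' o0 = u o0.
  have := Hu u' u'in; have := Hu' u uin; move=> /= hh1 /= hh2; lia.
have e1 : (u' o1 <= u o1)%N.
  have := Hu u' u'in; move=> /= hh1; lia.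
case: (boolP (has (fun a => (a + U_(o0) == u' + U_(o2))%MM) G)) => [/hasP [a' a'G /eqP Ea']|noa].
  exists u => //; apply: (removal_good (p := o0) (q := o1) (r := o2)) => //.
  move=> a c2 aG c2G Ea _.
  have h0 := congr1 (fun m : mon => m o0) Ea'; have h1 := congr1 (fun m : mon => m o1) Ea'.
  have N0 := @neq6 o0 o1 o2 isT isT isT.
  move: h0 h1; evq N0 => h0 h1.
  apply: (hole (d := d) (p := o0) (q := o1) (r := o2) (a := a) (z := a')) => //; lia.
exists u' => //; apply: (removal_good (p := o0) (q := o2) (r := o1)) => //.
move=> a c2 aG c2G Ea _; exfalso; move/hasP: noa; apply; exists a => //.
by apply/eqP.
Qed.

Lemma colon_comb_eq (P1 P2 : seq mon) u : P1 =i P2 -> colon_comb P2 u -> colon_comb P1 u.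
Proof.
move=> E H v; rewrite E => /H [l [h1 h2]]; exists l; split => //.
by rewrite /mon_in (eq_has_r E).
Qed.

Lemma comb_main d (G : seq mon) : uniq G -> (forall g, g \in G -> mdeg g = d) -> Cc G -> Bc G d ->
  exists ms, perm_eq ms G /\
    forall i, (0 < i < size ms)%N -> colon_comb (take i ms) (nth 0%MM ms i).
Proof.
move: {2}(size G) (leqnn (size G)) => n; elim: n G => [|n IH] G.
  rewrite leqn0 => /nilP -> *; exists [::]; split => // i /andP [_]; rewrite ltn0.
move=> sG uG Gd CG BG.
case: (altP (G =P [::])) => [->|Gn]; first by exists [::]; split => // i /andP [_]; rewrite ltn0.
have [u uin [CR BR]] := removal uG Gd CG BG Gn.
have sR : (size (rem u G) <= n)%N by rewrite size_rem //; case: (size G) sG.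
have [ms' [pms' Hms']] := IH (rem u G) sR (rem_uniq u uG)
   (fun g gR => Gd g (mem_rem gR)) CR BR.
exists (rcons ms' u); split.
  rewrite perm_sym (perm_trans (perm_to_rem uin)) //.
  by rewrite perm_sym perm_rcons perm_cons.
move=> i; rewrite size_rcons => /andP [i0 ilt].
have sms := perm_size pms'.
case: (ltnP i (size ms')) => ii.
  rewrite -cats1 take_cat ii nth_cat ii; apply: Hms'; lia.
have -> : i = size ms' by lia.
rewrite -cats1 take_cat ltnn subnn take0 cats0 nth_cat ltnn subnn /=.
apply: (colon_comb_eq (P2 := rem u G)); first exact: perm_mem.
exact: colon_from_C.
Qed.

Notation NN := #|{set 'I_3}|.
Section RS0.
Local Open Scope ring_scope.


Section Ideal.
Context (F : fieldType) (n : nat).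
Implicit Types (gs : seq {mpoly F[n]}) (f g : {mpoly F[n]}).

Lemma in_ideal0 gs : in_ideal gs 0.
Proof. by exists (fun _ => 0); rewrite big1 // => k _; rewrite mul0r. Qed.

Lemma in_idealD gs f g : in_ideal gs f -> in_ideal gs g -> in_ideal gs (f + g).
Proof.
move=> [c1 ->] [c2 ->]; exists (fun k => c1 k + c2 k).
by rewrite -big_split /=; apply: eq_bigr => k _; rewrite mulrDl.
Qed.

Lemma in_idealM gs h f : in_ideal gs f -> in_ideal gs (h * f).
Proof.
move=> [c ->]; exists (fun k => h * c k).
by rewrite mulr_sumr; apply: eq_bigr => k _; rewrite mulrA.
Qed.

Lemma in_ideal_sum gs (I : Type) (r : seq I) (Fi : I -> {mpoly F[n]}) :
  (forall i, in_ideal gs (Fi i)) -> in_ideal gs (\sum_(i <- r) Fi i).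
Proof.
move=> H; apply: (big_ind (in_ideal gs)); [exact: in_ideal0| exact: in_idealD | move=> i _; exact: H].
Qed.

Lemma in_ideal_gen gs (k : nat) : (k < size gs)%N -> in_ideal gs gs`_k.
Proof.
move=> ks; exists (fun j => ((j : nat) == k)%:R).
rewrite (bigD1 (Ordinal ks)) //= eqxx mul1r big1 ?addr0 // => j /eqP jk.
have -> : ((j : nat) == k) = false by apply/eqP => e; apply: jk; apply: val_inj.
by rewrite mul0r.
Qed.

Lemma monp_in (P : seq 'X_{1..n}) (a : 'X_{1..n}) :
  mon_in P a -> in_ideal [seq monp F u | u <- P] (monp F a).
Proof.
move=> /hasP [g gP /forallP ga].
have -> : monp F a = monp F (a - g)%MM * monp F g.
  rewrite /monp -mpolyXD; congr 'X_[_]; apply/mnmP => i.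
  by rewrite mnmDE mnmBE subnK // ga.
apply: in_idealM.
have ks : (index g P < size [seq monp F u | u <- P])%N by rewrite size_map index_mem.
by rewrite -(nth_index 0%MM gP) -(nth_map 0%MM 0) ?(index_mem) //; apply: in_ideal_gen.
Qed.

Lemma sum_neq0 (I : finType) (x : I -> {mpoly F[n]}) m :
  (\sum_i x i)@_m != 0 -> exists i, (x i)@_m != 0.
Proof.
move=> H; apply/existsP; apply: contraR H => /existsPn H.
rewrite raddf_sum big1 // => i _; apply/eqP; move: (H i); by rewrite negbK.
Qed.

Lemma in_ideal_mon (P : seq 'X_{1..n}) f :
  in_ideal [seq monp F u | u <- P] f -> forall a, a \in msupp f -> mon_in P a.
Proof.
move=> [c Ef] a; rewrite mcoeff_msupp Ef => /sum_neq0 [k].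
have ks : (k < size P)%N by rewrite -(size_map (@monp F n)) ltn_ord.
rewrite (nth_map 0%MM) // /monp -mcoeff_msupp.
rewrite (perm_mem (msuppMX _ _)) => /mapP [m' _ ->].
apply/hasP; exists (nth 0%MM P k); first exact: mem_nth.
by apply/forallP => i; rewrite mnmDE leq_addr.
Qed.

End Ideal.

Lemma colon_gen (F : fieldType) (P : seq mon) u : colon_comb P u -> colon_gen_by_vars F P u.
Proof.
move=> H; exists [set l | mon_in P (u + U_(l))%MM] => f.
set S := [set l | _].
have genk : forall k : nat, (k < size (enum S))%N ->
    [seq monp F (mnm1 j) | j <- enum S]`_k = monp F (mnm1 (nth o0 (enum S) k)).
  by move=> k ks; rewrite (nth_map o0).
split.
- move=> Hf; rewrite (mpolyE f) big_seq.
  apply: (big_ind (in_ideal _)); [exact: in_ideal0 | exact: in_idealD | move=> a aS].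
  have ua : (u + a)%MM \in msupp (f * monp F u).
    by rewrite /monp (perm_mem (msuppMX f u)); apply/mapP; exists a.
  have /hasP [g gP /forallP gua] := in_ideal_mon Hf ua.
  have [l [ul lS]] := H g gP.
  have al : (0 < a l)%N by move: (gua l); rewrite mnmDE; lia.
  have -> : f@_a *: 'X_[a] = (f@_a *: 'X_[a - U_(l)]) * monp F (mnm1 l).
    rewrite -scalerAl /monp -mpolyXD; congr (_ *: 'X_[_]); apply/mnmP => i.
    rewrite mnmDE mnmBE mnm1E; case: eqP => [<-|_]; lia.
  apply: in_idealM.
  have lS' : l \in enum S by rewrite mem_enum inE.
  have ks : (index l (enum S) < size (enum S))%N by rewrite index_mem.
  rewrite -(nth_index o0 lS') -genk //; apply: in_ideal_gen; by rewrite size_map.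
- move=> [c ->]; rewrite mulr_suml; apply: in_ideal_sum => k; rewrite -mulrA.
  apply: in_idealM.
  have ks : (k < size (enum S))%N by rewrite -(size_map (fun j => monp F (mnm1 j))) ltn_ord.
  rewrite genk // /monp -mpolyXD addmC.
  have : nth o0 (enum S) k \in S by rewrite -mem_enum mem_nth.
  by rewrite inE => /(monp_in F).
Qed.

End RS0.
Section RS1.
Local Open Scope ring_scope.


Section Rk.
Context (F : fieldType).

Lemma rank_le_rows m n (A : 'M[F]_(m, n)) (s : seq 'I_m) : uniq s ->
  (forall i j, i \notin s -> A i j = 0) -> (\rank A <= size s)%N.
Proof.
move=> us Hz.
pose f := fun t : 'I_(size s) => tnth (in_tuple s) t.
have finj : injective f.
  move=> t1 t2; have x0 : 'I_m := tnth (in_tuple s) t1.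
  rewrite /f !(tnth_nth x0) => /eqP.
  by rewrite nth_uniq // => /eqP /val_inj.
have -> : A = colsub f 1%:M *m rowsub f A.
  apply/matrixP => i j; rewrite !mxE.
  case: (boolP (i \in s)) => [ins|nins].
    have it : (index i s < size s)%N by rewrite index_mem.
    have fi : f (Ordinal it) = i by rewrite /f (tnth_nth i) /= nth_index.
    rewrite (bigD1 (Ordinal it)) //= !mxE fi eqxx mul1r big1 ?addr0 // => t tne.
    rewrite !mxE; have -> : (i == f t) = false.
      by apply/negbTE; rewrite -fi inj_eq // eq_sym.
    by rewrite mul0r.
  rewrite Hz // big1 // => t _; rewrite !mxE.
  have -> : (i == f t) = false.
    by apply/negbTE; apply: contra nins => /eqP ->; rewrite /f mem_tnth.
  by rewrite mul0r.
by apply: leq_trans (mxrankM_maxl _ _) (rank_leq_col _).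
Qed.

Lemma rank_ge_sel m (A : 'M[F]_m) (s : seq 'I_m) : uniq s ->
  (forall i j, i \in s -> j \in s -> A i j = (i == j)%:R) -> (size s <= \rank A)%N.
Proof.
move=> us H1.
pose f := fun t : 'I_(size s) => tnth (in_tuple s) t.
have finj : injective f.
  move=> t1 t2; have x0 : 'I_m := tnth (in_tuple s) t1.
  rewrite /f !(tnth_nth x0) => /eqP.
  by rewrite nth_uniq // => /eqP /val_inj.
have E : colsub f (rowsub f A) = 1%:M.
  apply/matrixP => i j; rewrite !mxE H1 ?mem_tnth // inj_eq //.
rewrite -{1}(mxrank1 F (size s)) -E -[rowsub f A]mulmx1 -mulmx_colsub.
apply: leq_trans (mxrankM_maxl _ _) _.
exact: mxrankS (rowsub_sub _ _).
Qed.

End Rk.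

End RS1.
Section RS2.
Local Open Scope ring_scope.


Definition kv (G : seq mon) (b : mon) (S : {set 'I_3}) :=
  has (fun g => mdivb g b && [forall i, (i \in S) ==> (g i < b i)%N]) G.

Lemma kvalidE G b S : kvalid G b S = kv G b S.
Proof.
rewrite /kvalid /kv; apply/idP/idP.
  case/andP => /mdivbP hS /hasP [g gG /mdivbP gb]; apply/hasP; exists g => //.
  apply/andP; split.
    apply/mdivbP => i; have := gb i; have := hS i; rewrite mnmBE /mnm_set mnmE; lia.
  apply/forallP => i; apply/implyP => iS; have := gb i; have := hS i.
  rewrite mnmBE /mnm_set mnmE iS /=; lia.
case/hasP => g gG /andP [/mdivbP gb /forallP gS]; apply/andP; split.
  apply/mdivbP => i; rewrite /mnm_set mnmE; have := gS i; have := gb i.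
  by case: (i \in S) => //=; lia.
apply/hasP; exists g => //; apply/mdivbP => i; rewrite mnmBE /mnm_set mnmE.
have := gS i; have := gb i; case: (i \in S) => /=; lia.
Qed.

Lemma kv_mono G b (S S' : {set 'I_3}) : S \subset S' -> kv G b S' -> kv G b S.
Proof.
move=> /subsetP sub /hasP [g gG /andP [gb /forallP gS]]; apply/hasP; exists g => //.
rewrite gb /=; apply/forallP => i; apply/implyP => iS; move: (gS i) => /implyP; apply.
exact: sub.
Qed.



Lemma kprojM (F : fieldType) G b i (A : 'M[F]_NN) p q :
  (kproj F G b i *m A) p q =
  if kv G b (enum_val p) && (#|enum_val p| == i)%N then A p q else 0.
Proof.
rewrite mxE (bigD1 p) //= big1 ?addr0.
  by rewrite mxE eqxx /= kvalidE; case: ifP => _; rewrite ?mul1r ?mul0r.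
by move=> r /negbTE rp; rewrite mxE eq_sym rp /= mul0r.
Qed.

Lemma kprojE (F : fieldType) G b i p q :
  kproj F G b i p q =
  if (p == q) && kv G b (enum_val p) && (#|enum_val p| == i)%N then 1 else 0.
Proof. by rewrite mxE kvalidE. Qed.

Lemma kdiffE (F : fieldType) G b p q :
  kdiff F G b p q =
  if kv G b (enum_val p) then
    \sum_(j in enum_val p | enum_val q == enum_val p :\ j)
        (-1) ^+ #|[set k in enum_val p | (k < j)%N]|
  else 0.
Proof. by rewrite mxE /= kvalidE. Qed.

Lemma two_sets (j k l : 'I_3) (S : {set 'I_3}) : j != k -> k != l -> j != l ->
  #|S| = 2%N -> [\/ S = [set j; k], S = [set j; l] | S = [set k; l]].
Proof.
move=> njk nkl njl cS.
have : #|~: S| = 1%N by move: (cardsC S); rewrite card_ord cS; lia.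
move=> /eqP /cards1P [m Em].
have ES : S = ~: [set m] by rewrite -Em setCK.
have N := neq6 njk nkl njl.
move: ES; case: (ord3_pqr njk nkl njl m) => [->|[->|->]] ES; [constructor 3| constructor 2| constructor 1];
  rewrite ES; apply/setP => x; rewrite !inE;
  case: (ord3_pqr njk nkl njl x) => [->|[->|->]]; rewrite ?eqxx ?N //.
Qed.

Lemma sigma2 (F : fieldType) (a b : 'I_3) (T : {set 'I_3}) : (a < b)%N ->
  \sum_(j in [set a; b] | T == [set a; b] :\ j)
     (-1) ^+ #|[set k in [set a; b] | (k < j)%N]| =
  ((T == [set b])%:R - (T == [set a])%:R :> F).
Proof.
move=> ab; have nab : a != b by apply/eqP => e; move: ab; rewrite e ltnn.
rewrite big_mkcondr /= big_setU1 /=; last by rewrite inE.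
rewrite big_set1.
have -> : [set a; b] :\ a = [set b] by rewrite setU1K // inE.
have -> : [set a; b] :\ b = [set a].
  by rewrite setUC setU1K // inE eq_sym.
have -> : [set k in [set a; b] | (k < a)%N] = set0.
  apply/setP => k; rewrite !inE; case: eqP => [->|_]; first by rewrite ltnn.
  by case: eqP => [->|_] //=; rewrite ltnNge ltnW.
have -> : [set k in [set a; b] | (k < b)%N] = [set a].
  apply/setP => k; rewrite !inE; case: eqP => [->|_]; first by rewrite ab.
  by case: eqP => [->|_]; rewrite ?ltnn.
rewrite cards0 cards1 expr0 expr1.
case: (T == [set b]); case: (T == [set a]); rewrite /= ?mulr1n ?mulr0n ?addr0 ?add0r ?subr0 ?sub0r.
all: by rewrite ?subrr ?oppr0.
Qed.

End RS2.
Section RS3.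
Local Open Scope ring_scope.


Lemma set1_neq (j k : 'I_3) : j != k -> [set j] != [set k].
Proof. by move=> njk; apply/eqP => /setP /(_ j); rewrite !inE eqxx (negbTE njk). Qed.

Lemma rank_P1D (F : fieldType) (G : seq mon) (b : mon) :
  (\rank (kproj F G b 1 *m kdiff F G b) <= 1)%N.
Proof.
rewrite -mxrank_tr; apply: (leq_trans (rank_le_rows (s := [:: enum_rank set0]) _ _)) => //.
move=> i q; rewrite inE mxE kprojM => ni.
case: ifP => // /andP [_ /cards1P [x Ex]]; rewrite kdiffE; case: ifP => // _.
apply: big1 => y /andP [yS /eqP Ti]; exfalso; move: ni; rewrite Ex inE in yS.
have Ti0 : enum_val i = set0.
  rewrite Ti Ex (eqP yS); apply/setP => z; rewrite !inE; by case: (z == x).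
by rewrite -(enum_valK i) Ti0 eqxx.
Qed.

Lemma betti1_pos (F : fieldType) (G : seq mon) (b : mon) (j k l : 'I_3) : j != k -> k != l -> j != l ->
  kv G b [set j] -> kv G b [set k] -> ~~ kv G b [set j; k] ->
  ~~ (kv G b [set j; l] && kv G b [set k; l]) -> betti_mdeg F G 1 b != 0%N.
Proof.
move=> njk nkl njl vj vk nvjk nboth.
have N := neq6 njk nkl njl.
rewrite /betti_mdeg.
have hA := rank_P1D F G b.
have hB := mxrankM_maxl (kproj F G b 2) (kdiff F G b).
have sel : forall s : seq {set 'I_3}, uniq s -> (forall S, S \in s -> kv G b S && (#|S| == 1)%N) ->
    (size s <= \rank (kproj F G b 1))%N.
  move=> s us Hs; rewrite -(size_map enum_rank).
  apply: rank_ge_sel; first by rewrite map_inj_uniq //; exact: enum_rank_inj.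
  move=> x y /mapP [S SS ->] /mapP [S' SS' ->]; rewrite kprojE enum_rankK -andbA (Hs S SS) andbT.
  by case: (_ == _).
have two : forall x : 'I_NN, kv G b (enum_val x) -> (#|enum_val x| == 2)%N ->
    [\/ enum_val x = [set j; k], enum_val x = [set j; l] | enum_val x = [set k; l]].
  by move=> x _ c2; apply: two_sets => //; apply/eqP.
case: (boolP (kv G b [set l])) => vl.
  have h1 : (3 <= \rank (kproj F G b 1))%N.
    apply: (sel [:: [set j]; [set k]; [set l]]).
      by rewrite /= !inE !negb_or !set1_neq.
    by move=> S; rewrite !inE => /or3P [] /eqP ->; rewrite cards1 ?vj ?vk ?vl.
  have h2 : (\rank (kproj F G b 2) <= 1)%N.
    pose s := if kv G b [set j; l] then [:: enum_rank [set j; l]] else [:: enum_rank [set k; l]].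
    apply: (leq_trans (rank_le_rows (s := s) _ _)); [by rewrite /s; case: ifP | | by rewrite /s; case: ifP].
    move=> x y nx; rewrite kprojE; case: ifP => // /andP [/andP [_ vx] cx].
    exfalso; move: nx; rewrite /s.
    case: (two x vx cx) => Ex.
    - by move: vx; rewrite Ex (negbTE nvjk).
    - case: ifP => h; first by rewrite inE -Ex enum_valK eqxx.
      by move: vx; rewrite Ex h.
    - case: ifP => h; last by rewrite inE -Ex enum_valK eqxx.
      by move: nboth; rewrite h -Ex vx.
  lia.
have h1 : (2 <= \rank (kproj F G b 1))%N.
  apply: (sel [:: [set j]; [set k]]); first by rewrite /= !inE andbT set1_neq.
  by move=> S; rewrite !inE => /orP [] /eqP ->; rewrite cards1 ?vj ?vk.
have h2 : (\rank (kproj F G b 2) <= 0)%N.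
  apply: (leq_trans (rank_le_rows (s := [::]) _ _)) => // x y _.
  rewrite kprojE; case: ifP => // /andP [/andP [_ vx] cx]; exfalso.
  have hl : forall S : {set 'I_3}, l \in S -> kv G b S -> kv G b [set l].
    by move=> S lS; apply: kv_mono; rewrite sub1set.
  case: (two x vx cx) => Ex.
  - by move: vx; rewrite Ex (negbTE nvjk).
  - by move: vl; rewrite (hl (enum_val x)) // Ex !inE eqxx orbT.
  - by move: vl; rewrite (hl (enum_val x)) // Ex !inE eqxx orbT.
lia.
Qed.

End RS3.
Section RS4.
Local Open Scope ring_scope.


Lemma betti2_pos (F : fieldType) (G : seq mon) (b : mon) :
  kv G b [set o0; o1] -> kv G b [set o0; o2] -> kv G b [set o1; o2] ->
  ~~ kv G b setT -> betti_mdeg F G 2 b != 0%N.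
Proof.
move=> v01 v02 v12 nvT.
have N := @neq6 o0 o1 o2 isT isT isT.
rewrite /betti_mdeg.
set P2 := kproj F G b 2; set D := kdiff F G b.
have h3 : (\rank (kproj F G b 3 *m D) <= 0)%N.
  apply: leq_trans (mxrankM_maxl _ _) _.
  apply: (leq_trans (rank_le_rows (s := [::]) _ _)) => // x y _.
  rewrite kprojE; case: ifP => // /andP [/andP [_ vx] cx]; exfalso.
  have : enum_val x = setT.
    apply/eqP; rewrite eqEcard subsetT cardsT card_ord; by rewrite (eqP cx).
  by move=> Ex; move: vx; rewrite Ex (negbTE nvT).
pose s3 := [:: [set o0; o1]; [set o0; o2]; [set o1; o2]].
have us3 : uniq s3.
  rewrite /= !inE andbT; apply/andP; split.
  - apply/norP; split; apply/eqP => /setP.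
    + by move=> /(_ o1); rewrite !inE.
    + by move=> /(_ o0); rewrite !inE.
  - by apply/eqP => /setP /(_ o0); rewrite !inE.
have vs3 : forall S, S \in s3 -> kv G b S && (#|S| == 2)%N.
  by move=> S; rewrite !inE => /or3P [] /eqP ->; rewrite cards2 ?v01 ?v02 ?v12.
have h2ge : (3 <= \rank P2)%N.
  change (size s3 <= \rank P2)%N; rewrite -(size_map enum_rank s3).
  apply: rank_ge_sel; first by rewrite map_inj_uniq //; exact: enum_rank_inj.
  move=> x y /mapP [S SS ->] /mapP [S' SS' ->]; rewrite kprojE enum_rankK -andbA (vs3 S SS) andbT.
  by case: (_ == _).
have h2le : (\rank P2 <= 3)%N.
  change (\rank P2 <= size s3)%N; rewrite -(size_map enum_rank s3).
  apply: (rank_le_rows); first by rewrite map_inj_uniq //; exact: enum_rank_inj.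
  move=> x y nx; rewrite kprojE; case: ifP => // /andP [/andP [_ vx] cx]; exfalso.
  move: nx; rewrite -(enum_valK x) mem_map; last exact: enum_rank_inj.
  case: (two_sets (isT : o0 != o1) (isT : o1 != o2) (isT : o0 != o2) (eqP cx)) => ->;
    by rewrite /s3 !inE eqxx ?orbT.
pose i01 := enum_rank [set o0; o1]; pose i02 := enum_rank [set o0; o2];
pose i12 := enum_rank [set o1; o2].
pose x : 'rV[F]_NN := delta_mx 0 i01 - delta_mx 0 i02 + delta_mx 0 i12.
have rowP2 : forall S, S \in s3 -> (delta_mx 0 (enum_rank S) : 'rV[F]_NN) *m P2 = delta_mx 0 (enum_rank S).
  move=> S SS; rewrite -rowE; apply/rowP => q; rewrite mxE /P2 kprojE mxE enum_rankK -andbA (vs3 S SS).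
  by rewrite andbT eq_sym eqxx /=; case: (q == _).
have xP2 : x *m P2 = x.
  by rewrite /x mulmxDl mulmxBl !rowP2 // !inE eqxx ?orbT.
have rowD : forall S, S \in s3 -> forall q, D (enum_rank S) q =
    \sum_(j in S | enum_val q == S :\ j) (-1) ^+ #|[set k in S | (k < j)%N]|.
  move=> S SS q; rewrite /D kdiffE enum_rankK.
  by case/andP: (vs3 S SS) => -> _.
have xD : x *m D = 0.
  rewrite /x mulmxDl mulmxBl -!rowE; clearbody D.
  apply/rowP => q; rewrite !mxE !rowD ?inE ?eqxx ?orbT //.
  rewrite !sigma2 //; ring.
have x0 : x != 0.
  apply/eqP => /rowP /(_ i01); rewrite /x !mxE eqxx /=.
  have -> : (i01 == i02) = false.
    by apply/eqP => /enum_rank_inj /setP /(_ o1); rewrite !inE.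
  have -> : (i01 == i12) = false.
    by apply/eqP => /enum_rank_inj /setP /(_ o0); rewrite !inE.
  by rewrite eqxx subr0 addr0 => /eqP; rewrite oner_eq0.
have hker : (1 <= \rank (P2 :&: kermx D))%N.
  have : (x <= P2 :&: kermx D)%MS.
    rewrite sub_capmx; apply/andP; split; first by rewrite -xP2 submxMl.
    by rewrite sub_kermx xD.
  move=> /mxrankS; apply: leq_trans; rewrite lt0n mxrank_eq0 //.
have := mxrank_mul_ker P2 D.
lia.
Qed.

End RS4.

Lemma N012 : ((o0 == o1) = false) * ((o1 == o0) = false) * ((o1 == o2) = false) * ((o2 == o1) = false)
  * ((o0 == o2) = false) * ((o2 == o0) = false).
Proof. exact: (@neq6 o0 o1 o2 isT isT isT). Qed.

Lemma kvE (G : seq mon) (b : mon) (S : {set 'I_3}) (c : mon) :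
  (forall i, b i = c i + (i \in S))%N -> kv G b S = mon_in G c.
Proof.
move=> Hb; rewrite -kvalidE /kvalid.
have -> : mdivb (mnm_set S) b by apply/mdivbP => i; rewrite /mnm_set mnmE Hb leq_addl.
have E : (b - mnm_set S)%MM = c.
  by apply/mnmP => i; rewrite mnmBE /mnm_set mnmE Hb addnK.
by rewrite E.
Qed.

Lemma linres_B (F : fieldType) (G : seq mon) d : linear_resolution F G d -> Bc G d.
Proof.
move=> LR c dc Hc; case: (boolP (mon_in G c)) => // nc; exfalso.
pose b : mon := [multinom (c i + 1)%N | i < 3].
have Hb : forall (S : {set 'I_3}) (c' : mon), (forall i, c' i = c i + (i \notin S))%N -> kv G b S = mon_in G c'.
  move=> S c' Hc'; apply: kvE => i; rewrite mnmE Hc'; case: (i \in S); lia.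
have e2 : forall l i, ((c + U_(l))%MM i = c i + (i \notin [set x | x != l]))%N.
  by move=> l i; rewrite mnmDE mnm1E !inE negbK eq_sym.
have v01 : kv G b [set o0; o1].
  rewrite (Hb _ (c + U_(o2))%MM) // => i; rewrite e2; congr (_ + _)%N; congr (nat_of_bool (~~ _)).
  by elim/ord3_ind: i; rewrite !inE.
have v02 : kv G b [set o0; o2].
  rewrite (Hb _ (c + U_(o1))%MM) // => i; rewrite e2; congr (_ + _)%N; congr (nat_of_bool (~~ _)).
  by elim/ord3_ind: i; rewrite !inE.
have v12 : kv G b [set o1; o2].
  rewrite (Hb _ (c + U_(o0))%MM) // => i; rewrite e2; congr (_ + _)%N; congr (nat_of_bool (~~ _)).
  by elim/ord3_ind: i; rewrite !inE.
have nvT : ~~ kv G b setT by rewrite (Hb _ c) // => i; rewrite inE addn0.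
have := betti2_pos F v01 v02 v12 nvT; rewrite LR //.
rewrite (mdeg3 _ (isT : o0 != o1) (isT : o1 != o2) (isT : o0 != o2)) /b !mnmE.
rewrite (mdeg3 _ (isT : o0 != o1) (isT : o1 != o2) (isT : o0 != o2)) in dc; lia.
Qed.

Definition Acond (G : seq mon) d := forall (b : mon) (j k l : 'I_3), j != k -> k != l -> j != l ->
  (d + 2 <= mdeg b)%N -> kv G b [set j] -> kv G b [set k] ->
  kv G b [set j; k] \/ (kv G b [set j; l] /\ kv G b [set k; l]).

Lemma linres_A (F : fieldType) (G : seq mon) d : linear_resolution F G d -> Acond G d.
Proof.
move=> LR b j k l njk nkl njl db vj vk.
case: (boolP (kv G b [set j; k])) => vjk; first by left.
case: (boolP (kv G b [set j; l] && kv G b [set k; l])) => [/andP [h1 h2]|nb]; first by right.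
exfalso; have := betti1_pos F njk nkl njl vj vk vjk nb; rewrite LR //; lia.
Qed.

Lemma d3 (a : mon) : mdeg a = (a o0 + a o1 + a o2)%N.
Proof. exact: (mdeg3 _ (isT : o0 != o1) (isT : o1 != o2) (isT : o0 != o2)). Qed.

Lemma le3 (a b : mon) : mdivb a b = [&& (a o0 <= b o0)%N, (a o1 <= b o1)%N & (a o2 <= b o2)%N].
Proof. exact: (mdivb3 _ _ (isT : o0 != o1) (isT : o1 != o2) (isT : o0 != o2)). Qed.

Lemma eq3 (a b : mon) : a o0 = b o0 -> a o1 = b o1 -> a o2 = b o2 -> a = b.
Proof. exact: (mnm3P (isT : o0 != o1) (isT : o1 != o2) (isT : o0 != o2)). Qed.

Lemma top_step (g b : mon) : mdivb g b -> mdeg b = (mdeg g).+1 ->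
  exists s, (g + U_(s))%MM = b.
Proof.
rewrite le3 !d3 => /and3P [h0 h1 h2] hd.
have : [\/ g o0 < b o0, g o1 < b o1 | g o2 < b o2]%N.
  case: (ltnP (g o0) (b o0)) => ?; first by constructor 1.
  case: (ltnP (g o1) (b o1)) => ?; first by constructor 2.
  constructor 3; lia.
case=> lt; [exists o0| exists o1| exists o2]; apply: eq3; rewrite !mnmDE !mnm1E ?N012 /= ?eqxx; lia.
Qed.

Lemma mdeg_le (a b : mon) : mdivb a b -> (mdeg a <= mdeg b)%N.
Proof. by rewrite le3 !d3 => /and3P [? ? ?]; lia. Qed.

Lemma mdeq (a b : mon) : mdivb a b -> mdeg a = mdeg b -> a = b.
Proof. exact: (mdiv_eq_deg (isT : o0 != o1) (isT : o1 != o2) (isT : o0 != o2)). Qed.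

Lemma close_adj (g h b : mon) d : mdeg g = d -> mdeg h = d -> (mdeg b <= d.+1)%N ->
  mdivb g b -> mdivb h b -> g != h -> adj g h.
Proof.
move=> dg dh db gb hb ngh.
case: (ltnP (mdeg b) d.+1) => db'.
  have gbE : g = b by apply: mdeq => //; have := mdeg_le gb; lia.
  have hbE : h = b by apply: mdeq => //; have := mdeg_le hb; lia.
  by move: ngh; rewrite gbE hbE eqxx.
have [s Es] : exists s, (g + U_(s))%MM = b by apply: top_step; lia.
have [l El] : exists l, (h + U_(l))%MM = b by apply: top_step; lia.
exists s, l; split; last by rewrite El Es.
apply/eqP => sl; move: ngh; rewrite sl in Es.
suff -> : g = h by rewrite eqxx.
by apply/mnmP => i; have := congr1 (fun m : mon => m i) Es; rewrite -El !mnmDE; lia.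
Qed.

Lemma third (j k : 'I_3) : j != k -> exists l, j != l /\ k != l.
Proof.
elim/ord3_ind: j; elim/ord3_ind: k => // _;
  first [by exists o0 | by exists o1 | by exists o2].
Qed.

Lemma kv1P (G : seq mon) (b : mon) j :
  reflect (exists2 g, g \in G & mdivb g b && (g j < b j)%N) (kv G b [set j]).
Proof.
apply: (iffP hasP) => [[g gG /andP [gb /forallP H]]|[g gG /andP [gb gj]]]; exists g => //.
  by rewrite gb /=; move: (H j); rewrite inE eqxx.
rewrite gb /=; apply/forallP => i; rewrite inE; apply/implyP => /eqP ->; exact: gj.
Qed.

Lemma kv2 (G : seq mon) (b : mon) j k : kv G b [set j; k] ->
  exists2 h, h \in G & [&& mdivb h b, (h j < b j)%N & (h k < b k)%N].
Proof.
move=> /hasP [h hG /andP [hb /forallP H]]; exists h => //.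
rewrite hb /=; apply/andP; split.
  by move: (H j); rewrite !inE eqxx.
by move: (H k); rewrite !inE eqxx orbT.
Qed.

Lemma le_bj (g b : mon) j : (0 < b j)%N ->
  mdivb g [multinom (b i - (i == j))%N | i < 3] = mdivb g b && (g j < b j)%N.
Proof.
move=> bj; apply/mdivbP/andP.
  move=> H; split; first by apply/mdivbP => i; have := H i; rewrite mnmE; lia.
  by have := H j; rewrite mnmE eqxx; lia.
case=> /mdivbP H gj i; rewrite mnmE; case: eqP => [->|_]; first by lia.
by rewrite subn0.
Qed.

Lemma mdeg_bj (b : mon) j : (0 < b j)%N ->
  (mdeg [multinom (b i - (i == j))%N | i < 3]).+1 = mdeg b.
Proof.
move=> bj; rewrite !d3 !mnmE; move: bj; elim/ord3_ind: j; rewrite ?N012 ?eqxx /=; lia.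
Qed.

Lemma exj (g b : mon) : (mdeg g < mdeg b)%N -> mdivb g b -> exists j, (g j < b j)%N.
Proof.
rewrite le3 !d3 => hd /and3P [h0 h1 h2].
case: (ltnP (g o0) (b o0)) => ?; first by exists o0.
case: (ltnP (g o1) (b o1)) => ?; first by exists o1.
exists o2; lia.
Qed.

Lemma CcA (G : seq mon) d : (forall g, g \in G -> mdeg g = d) -> Acond G d -> Cc G.
Proof.
move=> Gd AC.
suff H : forall n (b : mon), (mdeg b <= n)%N -> forall P : mon -> Prop,
    (exists g, [/\ g \in G, mdivb g b & P g]) ->
    (forall x y, x \in G -> y \in G -> mdivb x b -> mdivb y b -> adj x y -> P x -> P y) ->
    forall g, g \in G -> mdivb g b -> P g.
  by move=> b P; exact: (H (mdeg b) b (leqnn _) P).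
elim=> [|n IH] b hb P [g0 [g0G g0b Pg0]] cl g gG gb;
  (case: (leqP (mdeg b) d.+1) => hbd;
   [case: (altP (g0 =P g)) => [<- //|ne]; apply: (cl g0 g) => //;
    apply: (close_adj (b := b) (Gd _ g0G) (Gd _ gG)) => // | ]).
  lia.
have allP : forall j, (exists h, [/\ h \in G, mdivb h b, (h j < b j)%N & P h]) ->
    forall g', g' \in G -> mdivb g' b -> (g' j < b j)%N -> P g'.
  move=> j [h [hG hb' hj Ph]] g' g'G g'b g'j.
  have bj1 : (0 < b j)%N by lia.
  have le := le_bj _ bj1.
  have dbj := mdeg_bj bj1.
  apply: (IH [multinom (b i - (i == j))%N | i < 3] _ P).
  - lia.
  - by exists h; rewrite le hb' hj.
  - move=> x y xG yG; rewrite !le => /andP [xb _] /andP [yb _]; exact: cl.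
  - exact: g'G.
  - by rewrite le g'b g'j.
have [j0 gj0] : exists j, (g0 j < b j)%N by apply: exj => //; rewrite Gd //; lia.
have [j gj] : exists j, (g j < b j)%N by apply: exj => //; rewrite Gd //; lia.
case: (altP (j0 =P j)) => [ej|nj].
  by apply: (allP j0) => //; [exists g0 | rewrite ej].
have [l [nj0l njl]] := third nj.
have vj0 : kv G b [set j0] by apply/kv1P; exists g0 => //; rewrite g0b.
have vj : kv G b [set j] by apply/kv1P; exists g => //; rewrite gb.
case: (AC b j0 j l nj njl nj0l) => //; first lia.
  move=> /kv2 [h hG /and3P [hb' hj0 hj]].
  have Ph : P h by apply: (allP j0) => //; exists g0.
  by apply: (allP j) => //; exists h.
case=> /kv2 [h1 h1G /and3P [h1b h1j0 h1l]] /kv2 [h2 h2G /and3P [h2b h2j h2l]].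
have Ph1 : P h1 by apply: (allP j0) => //; exists g0.
have Ph2 : P h2 by apply: (allP l) => //; exists h1.
by apply: (allP j) => //; exists h2.
Qed.


Theorem mainTheorem2 (F : fieldType) (d : nat) (G : seq 'X_{1..3}) :
  uniq G ->
  (forall g, g \in G -> mdeg g = d) ->
  linear_resolution F G d ->
  exists ms : seq 'X_{1..3}, perm_eq ms G /\ linear_quotients F ms.
Proof.
move=> uG Gd LR.
have CG := CcA Gd (linres_A LR).
have BG := linres_B LR.
have [ms [pms H]] := comb_main uG Gd CG BG.
by exists ms; split => // i hi; apply: colon_gen; apply: H.
Qed.
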